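(* Let $(r(k))_{k\ge 0}$ be arbitrary elements of a commutative ring, and define $b(n,k)$ for integers $n\ge 0$, $k\ge -1$ by $b(0,k)=[k=0]$, $b(n,-1)=0$, and for $n>0$, $k\ge0$, $b(n,k)=b(n-1,k-1)+r(k)\,b(n-1,k+1)$. Then for every integer $n\ge 0$, $$\sum_{k=0}^{n}(-1)^k\, b(2n,2k)\prod_{j=0}^{k-1} r(2j)=[n=0].$$
   Context: $[P]$ denotes the Iverson bracket. An empty product equals $1$. *)

(* Defs.v *)
From HB Require Import structures.
From mathcomp Require Import all_boot all_order all_algebra.
Set Implicit Arguments. Unset Strict Implicit. Unset Printing Implicit Defensive.
Import GRing.Theory.
Local Open Scope ring_scope.

(* bcoef r n k = b(n,k) for k >= 0; the value b(n,-1) = 0 is built into the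
   k = 0 branch: b(n+1,0) = b(n,-1) + r(0) b(n,1) = r(0) b(n,1). *)
Fixpoint bcoef (R : comPzRingType) (r : nat -> R) (n : nat) : nat -> R :=
  match n with
  | 0 => fun k => (k == 0)%:R
  | n'.+1 => fun k => match k with
                      | 0 => r 0 * bcoef r n' 1
                      | k'.+1 => bcoef r n' k' + r k'.+1 * bcoef r n' k'.+2
                      end
  end.

(* Main.v *)
Require Import Defs.
From mathcomp Require Import all_boot all_order all_algebra.
From mathcomp Require Import zify ring.
Import GRing.Theory.
Local Open Scope ring_scope.

Lemma bcoef_big (R : comPzRingType) (r : nat -> R) N k :
  (N < k)%N -> bcoef r N k = 0.
Proof.
elim: N k => [|N IH] [|k] //= H.
rewrite !IH ?mulr0 ?addr0 // ; rewrite ltnS in H.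
by rewrite (ltn_trans H) // ltnW.
Qed.

Lemma step (R : comPzRingType) (r : nat -> R) N (f : nat -> R) :
  \sum_(0 <= k < N.+3) bcoef r N.+1 k * f k =
  \sum_(0 <= k < N.+2) bcoef r N k *
      (f k.+1 + (if k is k'.+1 then r k' * f k' else 0)).
Proof.
rewrite big_nat_recl //=.
under eq_big_nat => i _ do rewrite /= mulrDl.
rewrite big_split /=.
under [in RHS]eq_big_nat => i _ do rewrite mulrDr.
rewrite big_split /= addrCA; congr (_ + _).
rewrite [in RHS]big_nat_recl //= mulr0 add0r.
rewrite [in RHS]big_nat_recr //= (@bcoef_big _ r N N.+1) ?mul0r ?addr0; last by lia.
rewrite big_nat_recr //= (@bcoef_big _ r N N.+3) ?mulr0 ?mul0r ?addr0; last by lia.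
rewrite [LHS](_ : _ = \sum_(0 <= i < N.+2) r i * bcoef r N i.+1 * f i); last first.
  by rewrite [RHS]big_nat_recl.
rewrite big_nat_recr //= (@bcoef_big _ r N N.+2) ?mulr0 ?mul0r ?addr0; last by lia.
rewrite big_nat_recr //= (@bcoef_big _ r N N.+1) ?mulr0 ?mul0r ?addr0; last by lia.
by apply: eq_big_nat => i _; rewrite mulrCA mulrA.
Qed.

Definition cc (R : comPzRingType) (r : nat -> R) (h : nat) : R :=
  if odd h then 0 else (-1) ^+ (h./2) * \prod_(0 <= j < h./2) r (2 * j)%N.

Arguments cc {R}.

Lemma g_cc (R : comPzRingType) (r : nat -> R) k :
  cc r k.+1 + (if k is k'.+1 then r k' * cc r k' else 0) = 0.
Proof.
case: k => [|k]; first by rewrite /cc /= addr0.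
have [j [->|->]] : exists j, k = j.*2 \/ k = (j.*2).+1.
  exists k./2; case: (boolP (odd k)) => o; [right|left];
  by rewrite -[LHS](odd_double_half k) ?o ?(negPf o) ?add1n ?add0n.
- rewrite /cc /= odd_double /= !doubleK big_nat_recr //= exprS.
  by rewrite mul2n; ring.
- by have o := odd_double j; rewrite /cc /= o /= mulr0 addr0.
Qed.

Lemma split_even_odd (R : comPzRingType) m (F : nat -> R) :
  \sum_(h < (2 * m)%N.+1) F h = \sum_(k < m.+1) F (2 * k)%N + \sum_(k < m) F (2 * k)%N.+1.
Proof.
elim: m => [|m IH]; first by rewrite !big_ord1 big_ord0 addr0.
rewrite (_ : (2 * m.+1).+1 = ((2 * m).+1).+2)%N; last by rewrite mulnS.
rewrite [LHS]big_ord_recr /= [X in X + _ = _]big_ord_recr /= IH.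
rewrite [X in _ = X + _]big_ord_recr [X in _ = _ + X]big_ord_recr /=.
rewrite mulnS add2n; ring.
Qed.

Theorem lemma2 (R : comPzRingType) (r : nat -> R) (n : nat) :
  \sum_(0 <= k < n.+1)
     (-1) ^+ k * bcoef r (2 * n)%N (2 * k)%N * \prod_(0 <= j < k) r (2 * j)%N
  = (n == 0%N)%:R.
Proof.
have E : \sum_(0 <= k < n.+1)
     (-1) ^+ k * bcoef r (2 * n)%N (2 * k)%N * \prod_(0 <= j < k) r (2 * j)%N
   = \sum_(h < (2 * n)%N.+1) bcoef r (2 * n)%N h * cc r h.
  rewrite (@split_even_odd _ n (fun h => bcoef r (2 * n)%N h * cc r h)) [LHS]big_mkord.
  rewrite [X in _ = _ + X]big1 ?addr0; last first.
    by move=> i _; rewrite /cc /= oddM /= mulr0.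
  apply: eq_bigr => i _; rewrite /cc.
  have -> : (2 * i)%N./2 = i by rewrite mul2n doubleK.
  by rewrite oddM /= mulrCA mulrA.
rewrite E; clear E; case: n => [|m].
  by rewrite big_ord_recl big_ord0 /cc /= big_geq // expr0 !mul1r addr0.
rewrite (_ : (2 * m.+1).+1 = (2 * m).+1.+2)%N; last by rewrite mulnS.
rewrite (_ : (2 * m.+1) = (2 * m).+1.+1)%N; last by rewrite mulnS.
rewrite -(big_mkord xpredT (fun h => bcoef r (2 * m)%N.+2 h * cc r h)).
rewrite (_ : \sum_(0 <= h < (2 * m)%N.+3) bcoef r (2 * m)%N.+2 h * cc r h
   = \sum_(0 <= h < (2 * m)%N.+4) bcoef r (2 * m)%N.+2 h * cc r h); last first.
  rewrite [RHS]big_nat_recr // (@bcoef_big _ r (2 * m)%N.+2 (2 * m)%N.+3) ?mul0r; last exact: ltnSn.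
  by rewrite /= addr0.
rewrite (@step _ r (2 * m)%N.+1 (cc r)) big1 // => i _; by rewrite g_cc mulr0.
Qed.
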